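(* For every $n\ge2$ and every $A\subseteq[n]$, $f_n(A)\ge 2f_{n-1}(A)$ and $f_n(A)\ge 2^{n-1}$.
   Context: For $m\ge1$ and a set $B$ of positive integers, $f_m(B)$ denotes the number of linear orders $q$ on $[m]$ such that for every triple $i<j<k$ in $[m]$: if $j\in B$ then $i$ is not ranked last among $\{i,j,k\}$ in $q$, and if $j\notin B$ then $k$ is not ranked first among $\{i,j,k\}$ in $q$. *)

(* Defs.v *)
From mathcomp Require Import all_boot all_order all_fingroup.
Set Implicit Arguments. Unset Strict Implicit. Unset Printing Implicit Defensive.

(* Elements of [m] = {1,...,m} are represented by ordinals i : 'I_m, with
   i standing for the integer i+1.  A linear order q on [m] is represented
   by its rank bijection q : {perm 'I_m}: x is ranked before y iff q x < q y. *)

Definition good_triple (m : nat) (B : pred nat) (q : {perm 'I_m}) (i j k : 'I_m) : bool :=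
  if B j.+1 then ~~ ((q j < q i) && (q k < q i))   (* i not last *)
  else ~~ ((q k < q i) && (q k < q j)).            (* k not first *)

Definition good_order (m : nat) (B : pred nat) (q : {perm 'I_m}) : bool :=
  [forall i : 'I_m, forall j : 'I_m, forall k : 'I_m,
     ((i < j) && (j < k)) ==> good_triple B q i j k].

Definition f (m : nat) (B : pred nat) : nat :=
  #|[set q : {perm 'I_m} | good_order B q]|.

(* Main.v *)
Require Import Defs.
From mathcomp Require Import all_boot all_order all_fingroup.
From mathcomp Require Import zify.
Set Implicit Arguments. Unset Strict Implicit. Unset Printing Implicit Defensive.

Lemma goodP m B (q : {perm 'I_m}) :
  reflect (forall i j k : 'I_m, i < j -> j < k -> good_triple B q i j k)
          (good_order B q).
Proof.
apply: (iffP forallP) => [H i j k ij jk | H i].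
  by move/forallP: (H i) => /(_ j) /forallP /(_ k) /implyP; apply; rewrite ij jk.
apply/forallP => j; apply/forallP => k; apply/implyP => /andP[ij jk]; exact: H.
Qed.

Definition ins m (p : 'I_m.+1) (q : {perm 'I_m}) (x : 'I_m.+1) : 'I_m.+1 :=
  match unlift ord_max x with Some y => lift p (q y) | None => p end.

Lemma ins_lift m p (q : {perm 'I_m}) y : ins p q (lift ord_max y) = lift p (q y).
Proof. by rewrite /ins liftK. Qed.

Lemma ins_max m p (q : {perm 'I_m}) : ins p q ord_max = p.
Proof. by rewrite /ins unlift_none. Qed.

Lemma ins_inj m p (q : {perm 'I_m}) : injective (ins p q).
Proof.
move=> x1 x2; case: (unliftP ord_max x1) => [y1 ->|->];
  case: (unliftP ord_max x2) => [y2 ->|->];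
  rewrite ?ins_lift ?ins_max //.
- by move/lift_inj/perm_inj => ->.
- by move=> E; have := neq_lift p (q y1); rewrite E eqxx.
- by move=> E; have := neq_lift p (q y2); rewrite -E eqxx.
Qed.

Definition insP m p (q : {perm 'I_m}) : {perm 'I_m.+1} := perm (@ins_inj m p q).

Lemma insP_lift m p (q : {perm 'I_m}) y : insP p q (lift ord_max y) = lift p (q y).
Proof. by rewrite permE ins_lift. Qed.

Lemma insP_max m p (q : {perm 'I_m}) : insP p q ord_max = p.
Proof. by rewrite permE ins_max. Qed.

Lemma val_lift n (p : 'I_n.+1) (v : 'I_n) : (lift p v : nat) = (p <= v) + v.
Proof. by []. Qed.

Lemma ltn_lift n (p : 'I_n.+1) (a b : 'I_n) : (lift p a < lift p b) = (a < b).
Proof. rewrite !val_lift; case: (leqP p a); case: (leqP p b) => /= *; lia. Qed.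

Lemma lt_p_lift n (p : 'I_n.+1) (v : 'I_n) : (p < lift p v) = (p <= v).
Proof. rewrite !val_lift; case: (leqP p v) => /= *; lia. Qed.

Lemma good_lift m B p (q : {perm 'I_m}) i j k :
  good_triple B (insP p q) (lift ord_max i) (lift ord_max j) (lift ord_max k)
  = good_triple B q i j k.
Proof. by rewrite /good_triple !insP_lift !ltn_lift !lift_max. Qed.

Lemma count2 (aT rT : finType) (S : {set aT}) (T : {set rT}) (F G : aT -> rT) :
  injective F -> injective G ->
  (forall x, x \in S -> F x \in T) -> (forall x, x \in S -> G x \in T) ->
  (forall x y, F x != G y) -> 2 * #|S| <= #|T|.
Proof.
move=> iF iG FT GT FG.
have I0 : F @: S :&: G @: S = set0.
  apply/setP => z; rewrite !inE; apply/negP => /andP[/imsetP[x _ ->] /imsetP[y _ /eqP]].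
  by rewrite (negbTE (FG x y)).
have := cardsUI (F @: S) (G @: S); rewrite I0 cards0 addn0 !card_imset // => E.
rewrite mul2n -addnn -E; apply: subset_leq_card; apply/subsetP => z.
by rewrite inE => /orP[] /imsetP[x xS ->]; [apply: FT | apply: GT].
Qed.

Lemma nmax_lift m (x : 'I_m.+2) (k : 'I_m.+2) : x < k ->
  exists x', x = lift ord_max x'.
Proof.
case: (unliftP ord_max x) => [x' ->|->]; first by exists x'.
by move=> H; have := ltn_ord k; rewrite /= in H; lia.
Qed.

Definition F1 m (q : {perm 'I_m.+1}) : {perm 'I_m.+2} := insP ord_max q.

Lemma ltmaxF m (x : 'I_m.+2) : ((ord_max : 'I_m.+2) < x) = false.
Proof. by rewrite ltnNge leq_ord. Qed.

Lemma good_F1 m B (q : {perm 'I_m.+1}) : good_order B q -> good_order B (F1 q).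
Proof.
move/goodP=> Hq; apply/goodP => i j k ij jk.
have [i' Ei] := nmax_lift (leq_trans ij (ltnW jk)).
have [j' Ej] := nmax_lift jk.
subst i j; rewrite !lift_max in ij jk *.
case: (unliftP ord_max k) => [k' Ek|Ek]; subst k.
  by rewrite /F1 good_lift; apply: Hq; rewrite // -(lift_max k').
by rewrite /good_triple /F1 insP_max !ltmaxF !andbF; case: ifP.
Qed.

Lemma F1_inj m : injective (@F1 m).
Proof.
move=> q1 q2 E; apply/permP => y.
by have := congr1 (fun Q : {perm _} => Q (lift ord_max y)) E; rewrite /F1 !insP_lift => /lift_inj.
Qed.

Lemma F1_max m (q : {perm 'I_m.+1}) : F1 q ord_max = ord_max.
Proof. by rewrite /F1 insP_max. Qed.

Definition lm m : 'I_m.+2 := lift ord_max ord_max.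

Definition F2a m (q : {perm 'I_m.+1}) : {perm 'I_m.+2} := tperm (lm m) ord_max * F1 q.

Lemma val_lm m : (lm m : nat) = m.
Proof. by rewrite /lm lift_max. Qed.

Lemma neq_ord n (x y : 'I_n) : (x : nat) != y -> x != y.
Proof. by rewrite -val_eqE. Qed.

Lemma good_F2a m (B : pred nat) (q : {perm 'I_m.+1}) : B m.+1 ->
  good_order B q -> good_order B (F2a q).
Proof.
move=> Bm /good_F1 /goodP Hq; apply/goodP => i j k ij jk.
have ik := ltn_ord k.
have Hfix (x : 'I_m.+2) : (x : nat) < m -> F2a q x = F1 q x.
  move=> xm; rewrite /F2a permM tpermD //; apply: neq_ord; rewrite ?val_lm /=; lia.
have Qt : F2a q ord_max = F1 q (lm m) by rewrite /F2a permM tpermR.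
have Ql : F2a q (lm m) = ord_max by rewrite /F2a permM tpermL F1_max.
have [km|[kl|kt]] : (k : nat) < m \/ (k : nat) = m \/ (k : nat) = m.+1 by lia.
- rewrite /good_triple !Hfix //; try lia.
  by have := Hq i j k ij jk; rewrite /good_triple.
- have -> : k = lm m by apply: ord_inj; rewrite val_lm.
  by rewrite /good_triple Ql !ltmaxF !andbF; case: ifP.
- have -> : k = ord_max by apply/val_inj.
  have [jl|jm] : (j : nat) = m \/ (j : nat) < m by lia.
    have -> : j = lm m by apply: ord_inj; rewrite val_lm.
    by rewrite /good_triple val_lm Bm Ql ltmaxF.
  rewrite /good_triple Qt !Hfix //; try lia.
  by have := Hq i j (lm m) ij; rewrite val_lm => /(_ jm).
Qed.

Lemma F2a_inj m : injective (@F2a m).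
Proof. by move=> q1 q2; rewrite /F2a => /mulgI /F1_inj. Qed.

Lemma F12a m (q1 q2 : {perm 'I_m.+1}) : F1 q1 != F2a q2.
Proof.
apply/negP => /eqP /(congr1 (fun Q : {perm _} => Q ord_max)).
rewrite F1_max /F2a permM tpermR /F1 /lm insP_lift => E.
by have := neq_lift ord_max (q2 ord_max); rewrite -E eqxx.
Qed.

Definition pp m (q : {perm 'I_m.+1}) : 'I_m.+2 := inord (minn (q ord_max).+1 m).

Lemma val_pp m (q : {perm 'I_m.+1}) : (pp q : nat) = minn (q ord_max).+1 m.
Proof. by rewrite inordK //; lia. Qed.

Definition F2b m (q : {perm 'I_m.+1}) : {perm 'I_m.+2} := insP (pp q) q.

Lemma key m (q : {perm 'I_m.+1}) (v : 'I_m.+1) : v != q ord_max ->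
  (pp q < lift (pp q) v) = (q ord_max < v).
Proof.
move=> nv; rewrite lt_p_lift val_pp.
have := ltn_ord v; have := ltn_ord (q ord_max).
move: nv; rewrite -val_eqE /= => nv.
lia.
Qed.

Lemma good_F2b m (B : pred nat) (q : {perm 'I_m.+1}) : ~~ B m.+1 ->
  good_order B q -> good_order B (F2b q).
Proof.
move=> Bm /goodP Hq; apply/goodP => i j k ij jk.
have [i' Ei] := nmax_lift (leq_trans ij (ltnW jk)).
have [j' Ej] := nmax_lift jk.
subst i j; rewrite !lift_max in ij jk *.
case: (unliftP ord_max k) => [k' Ek|Ek]; subst k.
  by rewrite /F2b good_lift; apply: Hq; rewrite // -(lift_max k').
have ni : i' != ord_max.
  by apply: neq_ord => /=; have := ltn_ord j'; rewrite /= => ?; lia.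
have qni : q i' != q ord_max by rewrite (inj_eq perm_inj).
rewrite /good_triple /F2b insP_max !insP_lift !lift_max (key qni).
case: (eqVneq j' ord_max) => [Ej|nj].
  subst j'; rewrite (negbTE Bm) lt_p_lift val_pp.
  have := ltn_ord (q i'); have := ltn_ord (q ord_max).
  move: qni; rewrite -val_eqE /= => qni. lia.
have qnj : q j' != q ord_max by rewrite (inj_eq perm_inj).
rewrite (key qnj) ltn_lift.
have := Hq i' j' ord_max ij; rewrite /good_triple; apply.
by have := ltn_ord j'; move: nj; rewrite -val_eqE /=; lia.
Qed.

Lemma F2b_inj m : injective (@F2b m).
Proof.
move=> q1 q2 E.
have Ep : pp q1 = pp q2.
  by have := congr1 (fun Q : {perm _} => Q ord_max) E; rewrite /F2b !insP_max.
apply/permP => y.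
have := congr1 (fun Q : {perm _} => Q (lift ord_max y)) E.
by rewrite /F2b !insP_lift Ep => /lift_inj.
Qed.

Lemma F12b m (q1 q2 : {perm 'I_m.+1}) : F1 q1 != F2b q2.
Proof.
apply/negP => /eqP /(congr1 (fun Q : {perm _} => Q ord_max)).
rewrite F1_max /F2b insP_max => /(congr1 (@nat_of_ord _)); rewrite val_pp /=; lia.
Qed.

Lemma step m (A : pred nat) : 2 * f m.+1 A <= f m.+2 A.
Proof.
rewrite /f; case: (boolP (A m.+1)) => HA.
  apply: (@count2 _ _ _ _ (@F1 m) (@F2a m)).
  - exact: F1_inj.
  - exact: F2a_inj.
  - by move=> q; rewrite !inE; apply: good_F1.
  - by move=> q; rewrite !inE; apply: good_F2a.
  - exact: F12a.
apply: (@count2 _ _ _ _ (@F1 m) (@F2b m)).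
- exact: F1_inj.
- exact: F2b_inj.
- by move=> q; rewrite !inE; apply: good_F1.
- by move=> q; rewrite !inE; apply: good_F2b.
- exact: F12b.
Qed.

Lemma f1 (A : pred nat) : 1 <= f 1 A.
Proof.
rewrite /f card_gt0; apply/set0Pn; exists 1%g; rewrite inE.
apply/goodP => i j k; case: i => [[]] // ?; case: j => [[|]] //.
Qed.

Lemma pow_bound (A : pred nat) m : 2 ^ m <= f m.+1 A.
Proof.
elim: m => [|m IH]; first exact: f1.
by rewrite expnS (leq_trans _ (step m A)) // leq_mul2l.
Qed.

Theorem corollary1 (n : nat) (A : pred nat) :
  2 <= n ->
  (forall x, A x -> 1 <= x <= n) ->
  2 * f (n - 1) A <= f n A /\ 2 ^ (n - 1) <= f n A.
Proof.
case: n => [|[|m]] // _ _.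
rewrite !subSS subn0; split; first exact: step.
exact: pow_bound.
Qed.
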